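(* Let $X$ be a topological space and $T$ a locally compact Hausdorff space such that the mapping space $C(T,X)$ (with the compact-open topology) has the fixed point property. Then $X$ has the fixed point property with respect to $T$.
   Context: A space has the fixed point property if every continuous self-map of it has a fixed point. The compact-open topology on $C(T,X)$ is generated by the sets $\{g\colon T\to X\mid g(K)\subseteq U\}$ for $K\subseteq T$ compact and $U\subseteq X$ open. The space $X$ has the fixed point property with respect to $T$ if for every continuous map $f\colon T\times X\to X$ there is a continuous map $p\colon T\to X$ with $f(t,p(t))=p(t)$ for all $t\in T$. *)

(* Defs.v *)
From mathcomp Require Import all_boot all_order.
From mathcomp Require Import all_classical all_reals all_analysis.
Set Implicit Arguments. Unset Strict Implicit. Unset Printing Implicit Defensive.
Local Open Scope classical_set_scope.

(* A continuous self-map of A is represented by a function F : Y -> Y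
   mapping A into A and continuous within A (values outside A are irrelevant). *)
Definition fpp_on (Y : topologicalType) (A : set Y) : Prop :=
  forall F : Y -> Y, F @` A `<=` A -> {within A, continuous F} ->
    exists2 y, A y & F y = y.

Definition mapping_space (T X : topologicalType) : set {compact-open, T -> X} :=
  [set g | continuous (g : T -> X)].

Definition fpp_wrt (T X : topologicalType) : Prop :=
  forall f : T * X -> X, continuous f ->
    exists p : T -> X, continuous p /\ forall t, f (t, p t) = p t.

(* Main.v *)
Require Import Defs.
From mathcomp Require Import all_boot all_order.
From mathcomp Require Import all_classical all_reals all_analysis.
Local Open Scope classical_set_scope.

Theorem corollary6p2 (X T : topologicalType) :
  locally_compact [set: T] -> hausdorff_space T ->
  @fpp_on {compact-open, T -> X} (@mapping_space T X) -> @fpp_wrt T X.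
Proof.
move=> lcT hsdf fppC f ctsf.
pose F := (fun g : {compact-open, T -> X} =>
  (fun t => f (t, g t)) : {compact-open, T -> X}).
have cF : forall g : T -> X, continuous g -> continuous (fun t => f (t, g t)).
  move=> g cg t; apply: (continuous_comp _ (ctsf _)).
  by apply: cvg_pair => //; exact: cg.
have [g Ag Fg] : exists2 g, mapping_space g & F g = g.
  apply: fppC.
    by move=> _ [g Ag <-]; exact: cF.
  apply/subspace_continuousP => g Ag.
  apply/compact_open_cvgP => K O cptK oO FgKO.
  near=> h => w /= [+ + <-]; near: h.
  move/compact_near_coveringP/near_covering_withinP : cptK; apply.
  move=> t Kt.
  have [[P Q] [Pt Qgt] PQ] : nbhs (t, g t) (f @^-1` O).
    by apply: ctsf; apply: open_nbhs_nbhs; split => //; apply: FgKO; exists t.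
  move: Pt Qgt PQ => /= Pt Qgt PQ.
  have [Q' [oQ' Q'gt] Q'Q] : exists2 Q', open_nbhs (g t) Q' & Q' `<=` Q.
    by move: Qgt; rewrite nbhsE => -[Q' ? ?]; exists Q'.
  have gQ' : nbhs t (g @^-1` Q') by apply: Ag; exact: open_nbhs_nbhs.
  have [B] := @lcT t I; rewrite withinET => Bt [cptB clB].
  have [R Rt RS] := compact_regular hsdf cptB Bt (filterI Pt gQ').
  pose C := B `&` closure R.
  have cptC : compact C by apply: compact_closedI => //; exact: closed_closure.
  have CP : forall x, C x -> P x /\ Q' (g x).
    by move=> x [_ /RS [? ?]].
  exists (C, [set k : T -> X | forall x, C x -> O (k x)]).
    split.
      by apply: filterI => //; apply: filterS Rt; exact: subset_closure.
    rewrite /= nbhs_simpl.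
    have : nbhs g [set h : {compact-open, T -> X} | h @` C `<=` Q'].
      apply: open_nbhs_nbhs; split; first exact: compact_open_open.
      by move=> _ [x Cx <-]; case: (CP x Cx).
    apply: filterS => h hCQ _ x Cx.
    apply: (PQ (x, h x)); split; first by case: (CP x Cx).
    by apply: Q'Q; apply: hCQ; exists x.
  by case=> x k /= [Cx Sk] Kx; exact: Sk.
exists g; split => // t.
by have := congr1 (fun u : T -> X => u t) Fg.
Unshelve. all: by end_near.
Qed.
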